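(* Let $\mathbf x\in\mathbb F^6$ with $x_5=x_6=0$. Then for every $n\ge1$, every element of $\mathcal O_{\mathbf x}(n)$ is a linear combination of right-normed products $a_{\sigma(1)}(a_{\sigma(2)}(\cdots(a_{\sigma(n-1)}a_{\sigma(n)})\cdots))$, $\sigma\in S_n$. In particular there is a surjection of $S_n$-modules $\mathbb FS_n\to\mathcal O_{\mathbf x}(n)$.
   Context: Let $\mathbb F$ be a field of characteristic $0$. Let $\mathcal T$ be the free symmetric operad over $\mathbb F$ generated by one binary operation $(a_1,a_2)\mapsto a_1a_2$ with no symmetry; its arity-$n$ component $\mathcal T(n)$ is the vector space with basis all multilinear bracketed (nonassociative) monomials in $a_1,\dots,a_n$, with the right $S_n$-action permuting arguments. For $\mathbf x=(x_1,\dots,x_6)\in\mathbb F^6$, $\mathcal O_{\mathbf x}$ denotes the quotient of $\mathcal T$ by the operad ideal $\mathcal J_{\mathbf x}$ generated by the relation (LR): $(a_1a_2)a_3 = x_1a_1(a_2a_3)+x_2a_1(a_3a_2)+x_3a_2(a_1a_3)+x_4a_2(a_3a_1)+x_5a_3(a_1a_2)+x_6a_3(a_2a_1)$. *)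

(* Defs.v *)
From HB Require Import structures.
From mathcomp Require Import all_boot all_order all_algebra all_fingroup.
Set Implicit Arguments. Unset Strict Implicit. Unset Printing Implicit Defensive.
Import GRing.Theory.
Local Open Scope ring_scope.

(* Nonassociative bracketed monomials: binary trees with leaves labelled by
   variable indices (leaf [Leaf i] stands for a_i). *)
Inductive tree : Type := Leaf of nat | Node of tree & tree.

Fixpoint tree_eqb (s t : tree) : bool :=
  match s, t with
  | Leaf i, Leaf j => i == j
  | Node s1 s2, Node t1 t2 => tree_eqb s1 t1 && tree_eqb s2 t2
  | _, _ => false
  end.

Lemma tree_eqP : Equality.axiom tree_eqb.
Proof.
elim=> [i|s1 IH1 s2 IH2] [j|t1 t2] /=; try by constructor.
- by apply: (iffP eqP) => [->|[]].
- by case: (IH1 t1) => [->|H]; [case: (IH2 t2) => [->|H']; constructor; congruence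
                               | constructor; congruence].
Qed.

HB.instance Definition _ := hasDecEq.Build tree tree_eqP.

Fixpoint leaves (t : tree) : seq nat :=
  match t with Leaf i => [:: i] | Node l r => leaves l ++ leaves r end.

(* t is a multilinear monomial in a_1, ..., a_n (a basis element of T(n)) *)
Definition multilinear (n : nat) (t : tree) : bool := perm_eq (leaves t) (iota 1 n).

(* Formal linear combinations of monomials, and the vector (coefficient
   function) they represent. *)
Definition vec {F : fieldType} (s : seq (F * tree)) (t : tree) : F :=
  \sum_(p <- s) (if p.2 == t then p.1 else 0).

Inductive ctx : Type := Hole | CL of ctx & tree | CR of tree & ctx.

Fixpoint plug (C : ctx) (u : tree) : tree :=
  match C with
  | Hole => u
  | CL C' r => Node (plug C' u) r
  | CR l C' => Node l (plug C' u)
  end.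

(* The relation (LR) with arbitrary monomials u1 u2 u3 substituted for the
   arguments, inserted into a context C: these span the operad ideal J_x. *)
Definition genrel {F : fieldType} (x1 x2 x3 x4 x5 x6 : F)
    (C : ctx) (u1 u2 u3 : tree) : seq (F * tree) :=
  [:: (1, plug C (Node (Node u1 u2) u3));
      (- x1, plug C (Node u1 (Node u2 u3)));
      (- x2, plug C (Node u1 (Node u3 u2)));
      (- x3, plug C (Node u2 (Node u1 u3)));
      (- x4, plug C (Node u2 (Node u3 u1)));
      (- x5, plug C (Node u3 (Node u1 u2)));
      (- x6, plug C (Node u3 (Node u2 u1)))].

Definition idealJ {F : fieldType} (x1 x2 x3 x4 x5 x6 : F) (n : nat)
    (j : tree -> F) : Prop :=
  exists g : seq (F * (ctx * tree * tree * tree)),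
    all (fun q => multilinear n
           (plug q.2.1.1.1 (Node (Node q.2.1.1.2 q.2.1.2) q.2.2))) g /\
    forall t, j t = \sum_(q <- g)
       q.1 * vec (genrel x1 x2 x3 x4 x5 x6 q.2.1.1.1 q.2.1.1.2 q.2.1.2 q.2.2) t.

Fixpoint rnorm (s : seq nat) : tree :=
  match s with
  | [::] => Leaf 0
  | [:: i] => Leaf i
  | i :: s' => Node (Leaf i) (rnorm s')
  end.

Definition rn_perm {n : nat} (sigma : 'S_n) : tree :=
  rnorm [seq (sigma i).+1 | i <- enum 'I_n].

(* Main.v *)
Require Import Defs.
From HB Require Import structures.
From mathcomp Require Import all_boot all_order all_algebra all_fingroup.
From mathcomp Require Import zify ring.
Import GRing.Theory.
Local Open Scope ring_scope.

Fixpoint spine (p : seq nat) (t : tree) : tree :=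
  if p is i :: p' then Node (Leaf i) (spine p' t) else t.
Fixpoint sctx (p : seq nat) : ctx :=
  if p is i :: p' then CR (Leaf i) (sctx p') else Hole.
Lemma plug_sctx p u : plug (sctx p) u = spine p u.
Proof. by elim: p => //= i p ->. Qed.
Lemma leaves_spine p t : leaves (spine p t) = p ++ leaves t.
Proof. by elim: p => //= i p ->. Qed.
Lemma spine_rcons p i r : spine (rcons p i) r = spine p (Node (Leaf i) r).
Proof. by elim: p => //= a p ->. Qed.
Lemma spine_leaf p i : spine p (Leaf i) = rnorm (rcons p i).
Proof. elim: p => //= a p ->. by case: p. Qed.

Fixpoint sz t := if t is Node l r then (sz l + sz r)%N else 1%N.
Definition lm t := if t is Node l r then sz l else 0%N.
Definition M t := (sz t * sz t + lm t)%N.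
Lemma sz_gt0 t : (0 < sz t)%N.
Proof. elim: t => //= l Hl r Hr; lia. Qed.
Lemma lm_lt t : (lm t < sz t)%N.
Proof. case: t => //= l r; have := sz_gt0 r; lia. Qed.

Section S.
Set Implicit Arguments.
Variables (F : fieldType) (x1 x2 x3 x4 x5 x6 : F) (n : nat).

Definition ind (u : tree) : tree -> F := fun t => if u == t then 1 else 0.

Definition good (f : tree -> F) : Prop :=
  exists (c : 'S_n -> F) (j : tree -> F), idealJ x1 x2 x3 x4 x5 x6 n j /\
    forall t, f t = j t + \sum_(sigma : 'S_n) c sigma * (if rn_perm sigma == t then 1 else 0).

Lemma idealJ0 : idealJ x1 x2 x3 x4 x5 x6 n (fun _ => 0).
Proof. exists [::]; split => // t; by rewrite big_nil. Qed.

Lemma idealJD j1 j2 : idealJ x1 x2 x3 x4 x5 x6 n j1 -> idealJ x1 x2 x3 x4 x5 x6 n j2 ->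
  idealJ x1 x2 x3 x4 x5 x6 n (fun t => j1 t + j2 t).
Proof.
move=> [g1 [H1 E1]] [g2 [H2 E2]]; exists (g1 ++ g2); split.
  by rewrite all_cat H1 H2.
by move=> t; rewrite big_cat /= E1 E2.
Qed.

Lemma idealJZ a j : idealJ x1 x2 x3 x4 x5 x6 n j ->
  idealJ x1 x2 x3 x4 x5 x6 n (fun t => a * j t).
Proof.
move=> [g [H E]]; exists [seq (a * q.1, q.2) | q <- g]; split.
  rewrite all_map; exact H.
by move=> t; rewrite big_map E mulr_sumr; apply: eq_bigr => q _ /=; rewrite mulrA.
Qed.

Lemma good0 : good (fun _ => 0).
Proof.
exists (fun _ => 0), (fun _ => 0); split; first exact idealJ0.
move=> t; rewrite big1 ?addr0 // => s _; by rewrite mul0r.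
Qed.

Lemma goodE f g : f =1 g -> good f -> good g.
Proof. move=> E [c [j [H E']]]; exists c, j; split => // t; by rewrite -E. Qed.

Lemma goodD f g : good f -> good g -> good (fun t => f t + g t).
Proof.
move=> [c1 [j1 [H1 E1]]] [c2 [j2 [H2 E2]]].
exists (fun s => c1 s + c2 s), (fun t => j1 t + j2 t); split; first exact: idealJD.
move=> t; under eq_bigr do rewrite mulrDl.
rewrite big_split /= E1 E2; ring.
Qed.

Lemma goodZ a f : good f -> good (fun t => a * f t).
Proof.
move=> [c [j [H E]]].
exists (fun s => a * c s), (fun t => a * j t); split; first exact: idealJZ.
move=> t; under eq_bigr do rewrite -mulrA.
rewrite -mulr_sumr E; ring.
Qed.

Lemma goodJ p u v w : multilinear n (plug (sctx p) (Node (Node u v) w)) ->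
  good (vec (genrel x1 x2 x3 x4 x5 x6 (sctx p) u v w)).
Proof.
move=> H; exists (fun _ => 0), (vec (genrel x1 x2 x3 x4 x5 x6 (sctx p) u v w)); split.
  exists [:: (1, (sctx p, u, v, w))]; split; first by rewrite /= H.
  by move=> t; rewrite big_cons big_nil mul1r addr0.
move=> t; rewrite big1 ?addr0 // => s _; by rewrite mul0r.
Qed.

Lemma good_rnorm l : perm_eq l (iota 1 n) -> good (ind (rnorm l)).
Proof.
move=> H.
have Hs : size l = n by rewrite (perm_size H) size_iota.
have Hu : uniq l by rewrite (perm_uniq H) iota_uniq.
have Hm : forall k, (k < n)%N -> (0 < nth 0%N l k < n.+1)%N.
  move=> k Hk; have : nth 0%N l k \in iota 1 n by rewrite -(perm_mem H) mem_nth // Hs.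
  by rewrite mem_iota add1n.
have Hlt : forall i : 'I_n, ((nth 0%N l i).-1 < n)%N.
  move=> i; have := Hm i (ltn_ord i); lia.
pose f (i : 'I_n) : 'I_n := Ordinal (Hlt i).
have finj : injective f.
  move=> i j /(congr1 val) /= E; apply: val_inj => /=.
  have := Hm i (ltn_ord i); have := Hm j (ltn_ord j) => Hj Hi.
  have E' : nth 0%N l i = nth 0%N l j by lia.
  by apply/eqP; rewrite -(nth_uniq 0%N _ _ Hu) ?Hs // E'.
pose sigma := perm finj.
have Hsig : rn_perm sigma = rnorm l.
  rewrite /rn_perm; congr rnorm.
  transitivity [seq nth 0%N l i | i <- iota 0 n]; last by rewrite -Hs -/(mkseq _ _) mkseq_nth.
  rewrite -val_enum_ord -map_comp; apply: eq_map => i /=.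
  rewrite permE /=; have := Hm i (ltn_ord i); lia.
exists (fun s => if s == sigma then 1 else 0), (fun _ => 0); split; first exact idealJ0.
move=> t; rewrite (bigD1 sigma) //= big1 => [|s Hs']; last by rewrite (negbTE Hs') mul0r.
by rewrite eqxx mul1r addr0 add0r Hsig.
Qed.

Lemma ml_perm p t t' : perm_eq (leaves t') (leaves t) ->
  multilinear n (spine p t) -> multilinear n (spine p t').
Proof.
rewrite /multilinear !leaves_spine => Hp Hm; apply: perm_trans Hm; by rewrite perm_cat2l.
Qed.

Lemma ifZ (b : bool) (a : F) : (if b then - a else 0) = - (a * (if b then 1 else 0)).
Proof. by case: b; rewrite ?mulr1 ?mulr0 ?oppr0. Qed.

Lemma ringfact (b0 b1 b2 b3 b4 b5 b6 : F) : b0 = b0 + (-(x1*b1) + (-(x2*b2) + (-(x3*b3) + (-(x4*b4) + (-(0*b5) + (-(0*b6) + 0)))))) + x1*b1 + x2*b2 + x3*b3 + x4*b4.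
Proof. ring. Qed.

Lemma decomp p u v w t' : x5 = 0 -> x6 = 0 ->
  ind (spine p (Node (Node u v) w)) t' =
  vec (genrel x1 x2 x3 x4 x5 x6 (sctx p) u v w) t'
  + x1 * ind (spine p (Node u (Node v w))) t'
  + x2 * ind (spine p (Node u (Node w v))) t'
  + x3 * ind (spine p (Node v (Node u w))) t'
  + x4 * ind (spine p (Node v (Node w u))) t'.
Proof.
move=> h5 h6; rewrite /vec /genrel !big_cons big_nil /= !plug_sctx /ind !ifZ h5 h6.
apply: ringfact.
Qed.

Lemma main_claim : x5 = 0 -> x6 = 0 -> forall k t p, (M t < k)%N ->
  multilinear n (spine p t) -> good (ind (spine p t)).
Proof.
move=> h5 h6; elim=> // k IH t p Hk Hml.
case: t Hk Hml => [i | [i | u v] w] Hk Hml.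
- rewrite spine_leaf; apply: good_rnorm.
  by move: Hml; rewrite /multilinear leaves_spine /= cats1.
- rewrite -spine_rcons; apply: IH; last by rewrite spine_rcons.
  move: Hk; rewrite /M /=; have := sz_gt0 w; have := lm_lt w; nia.
- have Hsz := sz_gt0 v; have Hsu := sz_gt0 u; have Hsw := sz_gt0 w.
  have pm : forall t', perm_eq (leaves t') (leaves (Node (Node u v) w)) ->
     (M t' < k)%N -> good (ind (spine p t')).
    move=> t' Hp Hk'; apply: IH Hk' _; exact: ml_perm Hp Hml.
  have G1 := goodJ p u v w (etrans (congr1 _ (plug_sctx _ _)) Hml).
  have I1 : good (ind (spine p (Node u (Node v w)))).
    apply: pm; first by apply/seq.permP => a; rewrite /= !count_cat; lia.
    move: Hk; rewrite /M /=; nia.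
  have I2 : good (ind (spine p (Node u (Node w v)))).
    apply: pm; first by apply/seq.permP => a; rewrite /= !count_cat; lia.
    move: Hk; rewrite /M /=; nia.
  have I3 : good (ind (spine p (Node v (Node u w)))).
    apply: pm; first by apply/seq.permP => a; rewrite /= !count_cat; lia.
    move: Hk; rewrite /M /=; nia.
  have I4 : good (ind (spine p (Node v (Node w u)))).
    apply: pm; first by apply/seq.permP => a; rewrite /= !count_cat; lia.
    move: Hk; rewrite /M /=; nia.
  have G := goodD (goodD (goodD (goodD G1 (goodZ x1 I1)) (goodZ x2 I2)) (goodZ x3 I3)) (goodZ x4 I4).
  apply: (goodE _ G) => t'; by rewrite (decomp _ _ _ _ _ h5 h6).
Qed.

End S.

Theorem mainTheorem7 (F : fieldType) (x1 x2 x3 x4 x5 x6 : F) :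
  [pchar F] =i pred0 -> x5 = 0 -> x6 = 0 ->
  forall n : nat, (0 < n)%N ->
  forall s : seq (F * tree), all (fun p => multilinear n p.2) s ->
  exists (c : 'S_n -> F) (j : tree -> F),
    idealJ x1 x2 x3 x4 x5 x6 n j /\
    forall t : tree,
      vec s t = j t + \sum_(sigma : 'S_n) c sigma * (if rn_perm sigma == t then 1 else 0).
Proof.
move=> _ h5 h6 n _ s Hs.
suff G : @good F x1 x2 x3 x4 x5 x6 n (vec s) by exact G.
elim: s Hs => [|q s IH] /=.
  move=> _; exists (fun _ => 0), (fun _ => 0); split; first exact: idealJ0.
  move=> t; rewrite /vec !big_nil big1 ?addr0 // => s0 _; by rewrite mul0r.
move=> /andP [Hq Hs].
have G := goodD (goodZ q.1 (@main_claim F x1 x2 x3 x4 x5 x6 n h5 h6 (M q.2).+1 q.2 [::] (ltnSn _) Hq)) (IH Hs).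
apply: (goodE _ G) => t; rewrite /vec big_cons /ind /=.
by case: ifP; rewrite ?mulr1 ?mulr0.
Qed.
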